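(* Let $f(\mathbf{x};\boldsymbol{\theta})=g(\mathbf{W}\mathbf{x};\bar{\boldsymbol{\theta}})$ be a network from $\mathbb{R}^{P}$ to $\mathbb{R}^{N}$ whose first layer is linear with weight $\mathbf{W}\in\mathbb{R}^{d\times P}$, with parameter vector $\boldsymbol{\theta}=(\theta_1,\dots,\theta_m)$ consisting of the entries of $\mathbf{W}$ together with the remaining parameters $\bar{\boldsymbol{\theta}}$, and $g$ differentiable in its first argument and twice differentiable in the parameters. Let $(\mathbf{x}_i,\mathbf{y}_i)_{i=1}^n$ be training data, with $x^{(i)}_p$ the $p$-th entry of $\mathbf{x}_i$. Suppose $\varepsilon,M_0>0$ are such that $\|f(\mathbf{x}_i,\boldsymbol{\theta})-\mathbf{y}_i\|_2<\varepsilon$ for all $i$ and $|\theta_j|^2\|\partial^2 f(\mathbf{x}_i,\boldsymbol{\theta})/\partial\theta_j^2\|_2<M_0$ for all $i,j$. Then $$\frac1n\sum_{i=1}^n\sum_{j=1}^m|\theta_j|^2\Big\|\frac{\partial f(\mathbf{x}_i,\boldsymbol{\theta})}{\partial\theta_j}\Big\|_2^2\;\ge\;\frac{1}{nd}\sum_{i=1}^n\sum_{p=1}^{P}\Big\|\frac{\partial f(\mathbf{x}_i,\boldsymbol{\theta})}{\partial x_p}\Big\|_2^2\,(x_p^{(i)})^2.$$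
   Context: The right-hand side, $\frac1n\sum_i\sum_p\|\partial f/\partial x_p(\mathbf{x}_i)\|_2^2 (x_p^{(i)})^2$, is called the input-invariant MLS (up to the factor $1/d$); the left-hand side is, up to $O(\varepsilon)$, the elementwise-adaptive sharpness $\operatorname{Tr}(\nabla^2_{\boldsymbol{\theta}}L(\boldsymbol{\theta})\odot|\boldsymbol{\theta}||\boldsymbol{\theta}|^T)$ of the MSE loss $L(\boldsymbol{\theta})=\frac1n\sum_i\frac12\|f(\mathbf{x}_i,\boldsymbol{\theta})-\mathbf{y}_i\|_2^2$. Here $d$ is the number of rows of the first-layer weight matrix $\mathbf{W}$. *)

(* Defs.v *)
From HB Require Import structures.
From mathcomp Require Import all_boot all_order all_algebra.
From mathcomp Require Import all_classical all_reals all_analysis.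
Set Implicit Arguments. Unset Strict Implicit. Unset Printing Implicit Defensive.
Import Order.TTheory GRing.Theory Num.Theory.
Import numFieldNormedType.Exports.
Local Open Scope ring_scope.

Section Defs.
Variable R : realType.

Definition sqnorm2 (N : nat) (v : 'rV[R]_N) : R := \sum_(i < N) v 0 i ^+ 2.
Definition norm2 (N : nat) (v : 'rV[R]_N) : R := Num.sqrt (sqnorm2 v).

(* The network f(x; W, tb) = g(W x; tb), with x written as a row vector,
   so that W x corresponds to x *m W^T : 'rV_d. *)
Definition net (d P q N : nat) (g : 'rV[R]_d -> 'rV[R]_q -> 'rV[R]_N)
  (x : 'rV[R]_P) (W : 'M[R]_(d, P)) (tb : 'rV[R]_q) : 'rV[R]_N :=
  g (x *m W^T) tb.

Definition dW (d P q N : nat) g x (W : 'M[R]_(d, P)) (tb : 'rV[R]_q)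
  (k : 'I_d) (p : 'I_P) : 'rV[R]_N :=
  'D_(delta_mx k p) (fun W' => @net d P q N g x W' tb) W.
Definition dtb (d P q N : nat) g x (W : 'M[R]_(d, P)) (tb : 'rV[R]_q)
  (l : 'I_q) : 'rV[R]_N :=
  'D_(delta_mx 0 l) (fun t => @net d P q N g x W t) tb.
Definition dx (d P q N : nat) g (x : 'rV[R]_P) (W : 'M[R]_(d, P))
  (tb : 'rV[R]_q) (p : 'I_P) : 'rV[R]_N :=
  'D_(delta_mx 0 p) (fun y => @net d P q N g y W tb) x.

Definition d2W (d P q N : nat) g x (W : 'M[R]_(d, P)) (tb : 'rV[R]_q)
  (k : 'I_d) (p : 'I_P) : 'rV[R]_N :=
  'D_(delta_mx k p) (fun W' => @dW d P q N g x W' tb k p) W.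
Definition d2tb (d P q N : nat) g x (W : 'M[R]_(d, P)) (tb : 'rV[R]_q)
  (l : 'I_q) : 'rV[R]_N :=
  'D_(delta_mx 0 l) (fun t => @dtb d P q N g x W t l) tb.

End Defs.

(* Main.v *)
Require Import Defs.
From HB Require Import structures.
From mathcomp Require Import all_boot all_order all_algebra.
From mathcomp Require Import all_classical all_reals all_analysis.
From mathcomp Require Import ring lra.
Import Order.TTheory GRing.Theory Num.Theory.
Import numFieldNormedType.Exports.
Local Open Scope ring_scope.

Lemma derive_lin (R : realType) (U V X : normedModType R) (A : U -> V) (h : V -> X) a v :
  (forall u1 u2 (c : R), A (u1 + c *: u2) = A u1 + c *: A u2) ->
  'D_v (fun u => h (A u)) a = 'D_(A v) h (A a).
Proof.
move=> HA; rewrite /derive; do 2 f_equal; apply: funext => t /=.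
by rewrite [t *: v + a]addrC HA [A a + _]addrC.
Qed.

Lemma sqnorm2Z (R : realType) N (c : R) (v : 'rV[R]_N) :
  sqnorm2 (c *: v) = c ^+ 2 * sqnorm2 v.
Proof.
rewrite /sqnorm2 mulr_sumr; apply: eq_bigr => i _; by rewrite mxE exprMn.
Qed.

Lemma sqnorm2_ge0 (R : realType) N (v : 'rV[R]_N) : 0 <= sqnorm2 v.
Proof. by apply: sumr_ge0 => i _; rewrite sqr_ge0. Qed.

Lemma cs_scalar (R : realType) d (a : 'I_d -> R) :
  (\sum_k a k) ^+ 2 <= d%:R * \sum_k a k ^+ 2.
Proof.
have H : 0 <= \sum_(k < d) \sum_(l < d) (a k - a l) ^+ 2.
  by apply: sumr_ge0 => k _; apply: sumr_ge0 => l _; rewrite sqr_ge0.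
have E1 : \sum_(k < d) \sum_(l < d) a k ^+ 2 = d%:R * \sum_k a k ^+ 2.
  rewrite mulr_sumr; apply: eq_bigr => k _; by rewrite sumr_const card_ord mulr_natl.
have E2 : \sum_(k < d) \sum_(l < d) a l ^+ 2 = d%:R * \sum_k a k ^+ 2.
  by rewrite sumr_const card_ord mulr_natl.
have E3 : \sum_(k < d) \sum_(l < d) (a k * a l) = (\sum_k a k) ^+ 2.
  rewrite expr2 mulr_suml; apply: eq_bigr => k _; by rewrite mulr_sumr.
have E : \sum_(k < d) \sum_(l < d) (a k - a l) ^+ 2 =
   \sum_(k < d) \sum_(l < d) a k ^+ 2 + \sum_(k < d) \sum_(l < d) a l ^+ 2
   - (\sum_(k < d) \sum_(l < d) (a k * a l)) *+ 2.
  rewrite -big_split -sumrMnl -sumrN -big_split /=; apply: eq_bigr => k _.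
  rewrite -big_split -sumrMnl -sumrN -big_split /=; apply: eq_bigr => l _.
  by rewrite sqrrB; ring.
move: H; rewrite E E1 E2 E3; lra.
Qed.


Lemma cs_vec (R : realType) d N (v : 'I_d -> 'rV[R]_N) :
  sqnorm2 (\sum_k v k) <= d%:R * \sum_k sqnorm2 (v k).
Proof.
rewrite /sqnorm2 exchange_big mulr_sumr; apply: ler_sum => j _.
rewrite summxE; exact: cs_scalar.
Qed.

Lemma key (R : realType) d P q N (g : 'rV[R]_d -> 'rV[R]_q -> 'rV[R]_N)
  (W : 'M[R]_(d, P)) (tb : 'rV[R]_q) (x : 'rV[R]_P)
  (Hg1 : forall (z : 'rV[R]_d) (t : 'rV[R]_q), differentiable (g ^~ t) z) p :
  x 0 p *: dx g x W tb p = \sum_k W k p *: dW g x W tb k p.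
Proof.
set h := g ^~ tb; set z := x *m W^T.
have E1 : forall k, dW g x W tb k p = x 0 p *: 'd h z (delta_mx 0 k).
  move=> k; rewrite /dW /net.
  rewrite (@derive_lin _ _ _ _ (fun W' : 'M[R]_(d, P) => x *m W'^T) h); last first.
    by move=> u1 u2 c; rewrite linearD linearZ /= mulmxDr scalemxAr.
  rewrite deriveE; last exact: Hg1.
  have -> : x *m (delta_mx k p)^T = x 0 p *: delta_mx 0 k.
    rewrite trmx_delta; apply/rowP => j; rewrite !mxE (bigD1 p) //= big1.
      by rewrite !mxE eqxx /= addr0.
    by move=> i /negbTE ip; rewrite !mxE ip /= mulr0.
  by rewrite linearZ.
have E2 : dx g x W tb p = \sum_k W k p *: 'd h z (delta_mx 0 k).
  rewrite /dx /net.
  rewrite (@derive_lin _ _ _ _ (fun y : 'rV[R]_P => y *m W^T) h); last first.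
    by move=> u1 u2 c; rewrite mulmxDl scalemxAl.
  rewrite deriveE; last exact: Hg1. rewrite -rowE [row p W^T]row_sum_delta linear_sum /=.
  by apply: eq_bigr => k _; rewrite linearZ /= !mxE.
rewrite E2 scaler_sumr; apply: eq_bigr => k _.
by rewrite E1 !scalerA mulrC.
Qed.


Theorem proposition5 (R : realType) (n d P q N : nat)
  (g : 'rV[R]_d -> 'rV[R]_q -> 'rV[R]_N)
  (W : 'M[R]_(d, P)) (tb : 'rV[R]_q)
  (xs : 'I_n -> 'rV[R]_P) (ys : 'I_n -> 'rV[R]_N) (eps M0 : R)
  (* g differentiable in its first argument *)
  (Hg1 : forall (z : 'rV[R]_d) (t : 'rV[R]_q), differentiable (g ^~ t) z)
  (* g twice differentiable in the parameters *)
  (Hg2 : forall (z : 'rV[R]_d) (t : 'rV[R]_q),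
      differentiable (g z) t /\
      forall v : 'rV[R]_q, differentiable (fun t' => 'D_v (g z) t') t)
  (Heps : 0 < eps) (HM0 : 0 < M0)
  (Hfit : forall i, norm2 (net g (xs i) W tb - ys i) < eps)
  (HcurvW : forall i k p,
      W k p ^+ 2 * norm2 (d2W g (xs i) W tb k p) < M0)
  (Hcurvtb : forall i l,
      tb 0 l ^+ 2 * norm2 (d2tb g (xs i) W tb l) < M0) :
  (n%:R)^-1 * \sum_(i < n)
      ((\sum_(k < d) \sum_(p < P) W k p ^+ 2 * sqnorm2 (dW g (xs i) W tb k p))
       + \sum_(l < q) tb 0 l ^+ 2 * sqnorm2 (dtb g (xs i) W tb l))
  >= ((n * d)%:R)^-1 * \sum_(i < n) \sum_(p < P)
        sqnorm2 (dx g (xs i) W tb p) * xs i 0 p ^+ 2.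
Proof.
set SW := fun i : 'I_n => \sum_(k < d) \sum_(p < P) W k p ^+ 2 * sqnorm2 (dW g (xs i) W tb k p).
set T := fun i : 'I_n => \sum_(l < q) tb 0 l ^+ 2 * sqnorm2 (dtb g (xs i) W tb l).
have SWge0 : forall i, 0 <= SW i.
  move=> i; apply: sumr_ge0 => k _; apply: sumr_ge0 => p _.
  by apply: mulr_ge0; [exact: sqr_ge0 | exact: sqnorm2_ge0].
have Tge0 : forall i, 0 <= T i.
  move=> i; apply: sumr_ge0 => l _.
  by apply: mulr_ge0; [exact: sqr_ge0 | exact: sqnorm2_ge0].
have LHSge : (n%:R)^-1 * \sum_i SW i <= (n%:R)^-1 * \sum_i (SW i + T i).
  apply: ler_wpM2l; first by rewrite invr_ge0 ler0n.
  by apply: ler_sum => i _; rewrite lerDl.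
have Hi : forall i, \sum_(p < P) sqnorm2 (dx g (xs i) W tb p) * xs i 0 p ^+ 2
    <= d%:R * SW i.
  move=> i; rewrite /SW exchange_big /= mulr_sumr; apply: ler_sum => p _.
  rewrite mulrC -sqnorm2Z (@key _ _ _ _ _ g W tb (xs i) Hg1 p).
  apply: le_trans; first exact: cs_vec.
  by rewrite le_eqVlt; apply/orP; left; apply/eqP; congr (_ * _);
     apply: eq_bigr => k _; rewrite sqnorm2Z.
apply: le_trans LHSge.
have [d0|dpos] := eqVneq d 0%N.
  have -> : ((n * d)%:R)^-1 = 0 :> R by rewrite d0 muln0 invr0.
  rewrite mul0r; apply: mulr_ge0; first by rewrite invr_ge0 ler0n.
  by apply: sumr_ge0.
apply: le_trans (_ : ((n * d)%:R)^-1 * \sum_i (d%:R * SW i) <= _).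
  apply: ler_wpM2l; first by rewrite invr_ge0 ler0n.
  by apply: ler_sum => i _; exact: Hi.
rewrite -mulr_sumr mulrA natrM invfM divfK ?pnatr_eq0 //.

Qed.
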